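(* Let $\langle E,\rightarrow\rangle$ be a computation, $b_1,b_2$ regular predicates and $b=b_1\wedge b_2$. The graph $S_{\min}(E)$ has the same set of consistent cuts as the slice of $\langle E,\rightarrow\rangle$ with respect to $b$.
   Context: A computation is a directed graph $\langle E, \rightarrow\rangle$ whose vertices (events) are partitioned among processes $p_1,\dots,p_n$; events on each process are totally ordered, each process has an initial event and a final event, the path relation contains Lamport's happened-before relation, and all initial (resp. final) events lie in one strongly connected component. $\top$ is the set of final events and $\mathrm{succ}(e)$ the successor of $e$ on its process. A vertex subset $C$ is a consistent cut if for every edge $(u,v)$, $v\in C$ implies $u\in C$. A predicate is regular if whenever consistent cuts $C_1,C_2$ satisfy it, so do $C_1\cap C_2$ and $C_1\cup C_2$. The slice with respect to a predicate $c$ is a directed graph on $E$ whose consistent cuts include every consistent cut satisfying $c$ and which has the fewest consistent cuts among all such graphs. $F_c(e)[i]$ is the earliest event on $p_i$ reachable from $e$ in the slice with respect to $c$. $F_{\min}(e)[i]$ is whichever of $F_{b_1}(e)[i]$, $F_{b_2}(e)[i]$ occurs earlier on $p_i$. $S_{\min}(E)$ is the directed graph on $E$ with edges from each $e\notin\top$ to $\mathrm{succ}(e)$ and from each $e$ to $F_{\min}(e)[i]$ for every $i$. *)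

(* Defs.v *)
From mathcomp Require Import all_boot.
Set Implicit Arguments. Unset Strict Implicit. Unset Printing Implicit Defensive.

Section Computation.
Variables (n : nat) (E : finType) (arr : rel E) (proc : E -> 'I_n) (pos : E -> nat).

(* Events of one process are totally ordered by [pos]: e precedes f on the
   same process iff proc e = proc f and pos e < pos f. *)
Definition initial_ev (e : E) : bool :=
  [forall g, (proc g == proc e) ==> (pos e <= pos g)].
Definition final_ev (e : E) : bool :=
  [forall g, (proc g == proc e) ==> (pos g <= pos e)].

Definition is_succ (e f : E) : bool :=
  [&& proc f == proc e, pos e < pos f &
      [forall g, ((proc g == proc e) && (pos e < pos g)) ==> (pos f <= pos g)]].

Record is_computation : Prop := {
  pos_inj : forall e f, proc e = proc f -> pos e = pos f -> e = f;
  proc_nonempty : forall i : 'I_n, exists e, proc e = i;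
  hb_path : forall e f, proc e = proc f -> pos e < pos f -> connect arr e f;
  initial_scc : forall e f, initial_ev e -> initial_ev f -> connect arr e f;
  final_scc : forall e f, final_ev e -> final_ev f -> connect arr e f
}.

End Computation.

Definition cons_cut (E : finType) (G : rel E) (C : {set E}) : bool :=
  [forall u, forall v, G u v ==> (v \in C) ==> (u \in C)].

Definition cuts (E : finType) (G : rel E) : {set {set E}} :=
  [set C | cons_cut G C].

Definition regular (E : finType) (arr : rel E) (c : {set E} -> Prop) : Prop :=
  forall C1 C2, cons_cut arr C1 -> cons_cut arr C2 -> c C1 -> c C2 ->
    c (C1 :&: C2) /\ c (C1 :|: C2).

Definition is_slice (E : finType) (arr : rel E) (c : {set E} -> Prop) (G : rel E)
  : Prop :=
  (forall C, cons_cut arr C -> c C -> cons_cut G C) /\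
  (forall G' : rel E, (forall C, cons_cut arr C -> c C -> cons_cut G' C) ->
     #|cuts G| <= #|cuts G'|).

Definition earliest (n : nat) (E : finType) (proc : E -> 'I_n) (pos : E -> nat)
  (G : rel E) (e : E) (i : 'I_n) (f : E) : bool :=
  [&& proc f == i, connect G e f &
      [forall g, ((proc g == i) && connect G e g) ==> (pos f <= pos g)]].

Definition smin (n : nat) (E : finType) (proc : E -> 'I_n) (pos : E -> nat)
  (G1 G2 : rel E) : rel E :=
  fun e f =>
    (~~ final_ev proc pos e && is_succ proc pos e f) ||
    [exists i : 'I_n, exists f1 : E, exists f2 : E,
       [&& earliest proc pos G1 e i f1, earliest proc pos G2 e i f2 &
           f == (if pos f1 <= pos f2 then f1 else f2)]].

(* Main.v *)
From Stdlib Require Import ClassicalEpsilon.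
Require Import Defs.
From mathcomp Require Import all_boot.
From mathcomp Require Import zify.

Set Implicit Arguments. Unset Strict Implicit. Unset Printing Implicit Defensive.

Definition bb (T : finType) (c : {set T} -> Prop) (D : {set T}) : bool :=
  if excluded_middle_informative (c D) then true else false.

Lemma bbP (T : finType) (c : {set T} -> Prop) D : reflect (c D) (bb c D).
Proof. by rewrite /bb; case: excluded_middle_informative => h; constructor. Qed.

Definition RY (E : finType) (Y : {set {set E}}) : rel E :=
  fun u v => [forall D in Y, (v \in D) ==> (u \in D)].

Definition Xc (E : finType) (arr : rel E) (c : {set E} -> Prop) : {set {set E}} :=
  [set D | cons_cut arr D && bb c D].

Lemma cons_cutP (E : finType) (G : rel E) (C : {set E}) :
  reflect (forall u v, G u v -> v \in C -> u \in C) (cons_cut G C).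
Proof.
apply: (iffP forallP) => [H u v Guv vC | H u].
- by move/forallP: (H u) => /(_ v); rewrite Guv vC.
- apply/forallP => v; apply/implyP => Guv; apply/implyP; exact: H.
Qed.

Lemma cutsR_sub (E : finType) (Y : {set {set E}}) (G' : rel E) :
  (forall D, D \in Y -> cons_cut G' D) ->
  forall C, cons_cut (RY Y) C -> cons_cut G' C.
Proof.
move=> HY C /cons_cutP HC; apply/cons_cutP => u v Guv vC; apply: (HC u v) => //.
apply/forall_inP => D DY; apply/implyP => vD.
exact: (elimT (cons_cutP _ _) (HY D DY)) u v Guv vD.
Qed.

Lemma Y_cutR (E : finType) (Y : {set {set E}}) D : D \in Y -> cons_cut (RY Y) D.
Proof.
move=> DY; apply/cons_cutP => u v /forall_inP H vD; exact: (implyP (H D DY)) vD.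
Qed.

Lemma slice_eq (E : finType) (arr : rel E) c G :
  is_slice arr c G -> cuts G = cuts (RY (Xc arr c)).
Proof.
case=> H1 H2.
have sub : cuts (RY (Xc arr c)) \subset cuts G.
  apply/subsetP => C; rewrite !inE; apply: cutsR_sub => D.
  rewrite inE => /andP[Da /bbP Dc]; exact: H1.
apply/esym/eqP; rewrite eqEcard sub /=.
apply: H2 => C Ca Cc; apply: Y_cutR; rewrite inE Ca /=; exact/bbP.
Qed.

Lemma cut_I (E : finType) (G : rel E) A B :
  cons_cut G A -> cons_cut G B -> cons_cut G (A :&: B).
Proof.
move=> /cons_cutP HA /cons_cutP HB; apply/cons_cutP => u v Guv.
rewrite !inE => /andP[vA vB]; by rewrite (HA u v) ?(HB u v).
Qed.

Lemma cut_U (E : finType) (G : rel E) A B :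
  cons_cut G A -> cons_cut G B -> cons_cut G (A :|: B).
Proof.
move=> /cons_cutP HA /cons_cutP HB; apply/cons_cutP => u v Guv.
rewrite !inE => /orP[vA|vB]; [by rewrite (HA u v) | by rewrite (HB u v) ?orbT].

Qed.

Lemma lattice (E : finType) (arr : rel E) c : regular arr c ->
  forall C, cons_cut (RY (Xc arr c)) C ->
  [\/ C = set0, C = setT | cons_cut arr C /\ c C].
Proof.
move=> reg C HC.
pose P (D : {set E}) := [\/ D = set0, D = setT | cons_cut arr D /\ c D].
have PI : forall A B, P A -> P B -> P (A :&: B).
  move=> A B [->|->|[Aa Ac]] [->|->|[Ba Bc]];
    rewrite ?set0I ?setTI ?setI0 ?setIT;
    try (by apply: Or31); try (by apply: Or32); try (by apply: Or33; split).
  apply: Or33; split; [exact: cut_I | by case: (reg A B Aa Ba Ac Bc)].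
have PU : forall A B, P A -> P B -> P (A :|: B).
  move=> A B [->|->|[Aa Ac]] [->|->|[Ba Bc]];
    rewrite ?set0U ?setTU ?setU0 ?setUT;
    try (by apply: Or31); try (by apply: Or32); try (by apply: Or33; split).
  apply: Or33; split; [exact: cut_U | by case: (reg A B Aa Ba Ac Bc)].
pose M w := \bigcap_(D | (D \in Xc arr c) && (w \in D)) D.
have PM : forall w, P (M w).
  move=> w; apply: big_ind => //; first by apply: Or32.
  move=> D /andP[]; rewrite inE => /andP[Da /bbP Dc] _; exact: Or33.
have -> : C = \bigcup_(w in C) M w.
  apply/setP => x; apply/idP/bigcupP => [xC | [w wC /bigcapP xM]].
  - exists x => //; apply/bigcapP => D /andP[].
    by [].
  - apply: ((elimT (cons_cutP _ _) HC) x w) => //.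
    apply/forall_inP => D DY; apply/implyP => wD; apply: xM; by rewrite DY wD.
change (P (\bigcup_(w in C) M w)); apply: big_ind => //; by apply: Or31.
Qed.

Lemma cut_connect (E : finType) (K : rel E) C e f :
  cons_cut K C -> connect K e f -> f \in C -> e \in C.
Proof.
move=> /cons_cutP HC /connectP [p]; elim: p e => [|x p IH] e /=.
- by move=> _ ->.
- move=> /andP[Kex Hp] Hf fC; apply: (HC e x Kex); exact: IH Hp Hf fC.
Qed.

Lemma connect_sub (E : finType) (arr H : rel E) e f :
  (forall C, cons_cut H C -> cons_cut arr C) -> connect arr e f -> connect H e f.
Proof.
move=> Hs Haf; pose C := [set x | connect H x f].
have CH : cons_cut H C.
  apply/cons_cutP => u v Huv; rewrite !inE => vf.
  exact: connect_trans (connect1 Huv) vf.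
have := cut_connect (Hs _ CH) Haf; rewrite !inE connect0; exact.
Qed.

Section Main.
Variables (n : nat) (E : finType) (arr : rel E) (proc : E -> 'I_n) (pos : E -> nat).
Hypothesis comp : is_computation arr proc pos.
Variables (G1 G2 : rel E).
Hypothesis hs1 : forall C, cons_cut G1 C -> cons_cut arr C.
Hypothesis hs2 : forall C, cons_cut G2 C -> cons_cut arr C.

Lemma final_of (i : 'I_n) : exists f, proc f = i /\ final_ev proc pos f.
Proof.
have [e0 pe0] := proc_nonempty comp i.
have pe0' : (fun g => proc g == i) e0 by rewrite /= pe0.
case: (@arg_maxnP E e0 (fun g => proc g == i) pos pe0') => f /eqP pf Hf.
exists f; split => //; apply/forallP => g; apply/implyP; rewrite pf => pg.
exact: Hf.
Qed.

Lemma reach (H : rel E) : (forall C, cons_cut H C -> cons_cut arr C) ->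
  forall u (i : 'I_n), exists g, proc g = i /\ connect H u g.
Proof.
move=> Hs u i.
have [fi [pfi ffi]] := final_of i.
have [fu [pfu ffu]] := final_of (proc u).
exists fi; split => //; apply: connect_sub Hs _.
apply: (connect_trans (y := fu)); last exact: (final_scc comp).
have : pos u <= pos fu by move/forallP: ffu => /(_ u); rewrite pfu eqxx.
rewrite leq_eqVlt => /orP[/eqP e | lt].
- by rewrite (pos_inj comp (esym pfu) e) connect0.
- exact: (hb_path comp (esym pfu) lt).
Qed.

Lemma exists_earliest (H : rel E) u (i : 'I_n) g :
  proc g = i -> connect H u g -> exists f, earliest proc pos H u i f.
Proof.
move=> pg cg.
have Pg : (fun h => (proc h == i) && connect H u h) g by rewrite /= pg eqxx cg.
case: (@arg_minnP E g (fun h => (proc h == i) && connect H u h) pos Pg) => f /andP[pf cf] Hf.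
exists f; rewrite /earliest pf cf /=; apply/forallP => h; apply/implyP; exact: Hf.
Qed.

Notation S := (smin proc pos G1 G2).

Lemma pred_closed C : cons_cut S C -> forall k v m, pos v - pos m < k ->
  proc m = proc v -> pos m <= pos v -> v \in C -> m \in C.
Proof.
move=> HC; elim=> [//|k IH] v m hk pm lemv vC.
case: (eqVneq (pos m) (pos v)) => [e | ne].
  by rewrite (pos_inj comp pm e).
have ltmv : pos m < pos v by rewrite ltn_neqAle ne lemv.
have Pm : (fun h => (proc h == proc v) && (pos h < pos v)) m by rewrite /= pm eqxx ltmv.
case: (@arg_maxnP E m (fun h => (proc h == proc v) && (pos h < pos v)) pos Pm) => g /andP[/eqP pg ltg] Hg.
have gC : g \in C.
  apply: ((elimT (cons_cutP _ _) HC) g v) => //.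
  apply/orP; left; apply/andP; split.
  - apply/negP => /forallP /(_ v); rewrite pg eqxx /= => h.
    by have := leq_ltn_trans h ltg; rewrite ltnn.
  - rewrite /is_succ pg eqxx ltg /=; apply/forallP => h; apply/implyP.
    case/andP => /eqP ph lth; rewrite leqNgt; apply/negP => hv.
    have hle : pos h <= pos g by apply: Hg; apply/andP; split; [rewrite ph; exact/eqP | exact: hv].
    by have := leq_ltn_trans hle lth; rewrite ltnn.
have lemg : pos m <= pos g by apply: (Hg m Pm).
apply: (IH g m) => //; [lia | by rewrite pm pg].
Qed.

Lemma smin_back C : cons_cut S C -> forall u v,
  (connect G1 u v \/ connect G2 u v) -> v \in C -> u \in C.
Proof.
move=> HC u v hc vC.
have [g1 [pg1 cg1]] := reach hs1 u (proc v).
have [g2 [pg2 cg2]] := reach hs2 u (proc v).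
have [f1 E1] : exists f1, earliest proc pos G1 u (proc v) f1.
  case: hc => [h|_]; [exact: exists_earliest h | exact: exists_earliest cg1].
have [f2 E2] : exists f2, earliest proc pos G2 u (proc v) f2.
  case: hc => [_|h]; [exact: exists_earliest cg2 | exact: exists_earliest h].
pose m := if pos f1 <= pos f2 then f1 else f2.
have Sm : S u m.
  apply/orP; right; apply/existsP; exists (proc v); apply/existsP; exists f1.
  apply/existsP; exists f2; by rewrite E1 E2 eqxx.
move: E1 E2 => /and3P[/eqP p1 _ /forallP h1] /and3P[/eqP p2 _ /forallP h2].
have pm : proc m = proc v by rewrite /m; case: ifP.
have m1 : pos m <= pos f1 by rewrite /m; case: (leqP (pos f1) (pos f2)) => h; [exact: leqnn | exact: ltnW].
have m2 : pos m <= pos f2 by rewrite /m; case: (leqP (pos f1) (pos f2)) => h; [exact: h | exact: leqnn].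
have lem : pos m <= pos v.
  case: hc => h.
  - have : pos f1 <= pos v by have := implyP (h1 v); rewrite eqxx h; apply.
    exact: leq_trans.
  - have : pos f2 <= pos v by have := implyP (h2 v); rewrite eqxx h; apply.
    exact: leq_trans.
have mC : m \in C by apply: (pred_closed HC (k := (pos v - pos m).+1)).
exact: ((elimT (cons_cutP _ _) HC) u m).
Qed.

Lemma smin_G1 C : cons_cut S C -> cons_cut G1 C.
Proof.
move=> HC; apply/cons_cutP => u v Guv vC; apply: (smin_back HC) vC.
by left; apply: connect1.
Qed.

Lemma smin_G2 C : cons_cut S C -> cons_cut G2 C.
Proof.
move=> HC; apply/cons_cutP => u v Guv vC; apply: (smin_back HC) vC.
by right; apply: connect1.
Qed.

Lemma G12_smin C : cons_cut G1 C -> cons_cut G2 C -> cons_cut S C.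
Proof.
move=> H1 H2; apply/cons_cutP => u v.
case/orP => [/andP[_ /and3P[/eqP pv lt _]] |
  /existsP[i /existsP[f1 /existsP[f2 /and3P[e1 e2 /eqP ->]]]]] vC.
- apply: (cut_connect H1 _ vC); apply: connect_sub hs1 _.
  exact: (hb_path comp (esym pv) lt).
- move: e1 e2 => /and3P[_ c1 _] /and3P[_ c2 _].
  by case: ifP vC => _ vC; [apply: (cut_connect H1 c1) | apply: (cut_connect H2 c2)].
Qed.

End Main.


Theorem theorem14 (n : nat) (E : finType) (arr : rel E) (proc : E -> 'I_n)
  (pos : E -> nat) (b1 b2 : {set E} -> Prop) (G1 G2 G : rel E) :
  is_computation arr proc pos ->
  regular arr b1 -> regular arr b2 ->
  is_slice arr b1 G1 -> is_slice arr b2 G2 ->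
  is_slice arr (fun C => b1 C /\ b2 C) G ->
  cuts (smin proc pos G1 G2) = cuts G.
Proof.
move=> comp r1 r2 s1 s2 s.
have toR : forall c H, is_slice arr c H -> forall C, cons_cut H C ->
    cons_cut (RY (Xc arr c)) C.
  move=> c H sH C HC; have : C \in cuts H by rewrite inE.
  by rewrite (slice_eq sH) inE.
have hs : forall c H, is_slice arr c H -> forall C, cons_cut H C -> cons_cut arr C.
  move=> c H sH C HC; apply: cutsR_sub (toR _ _ sH _ HC) => D.
  by rewrite inE => /andP[].
have hs1 := hs _ _ s1; have hs2 := hs _ _ s2.
have GtoG12 : forall C, cons_cut G C -> cons_cut G1 C /\ cons_cut G2 C.
  move=> C HC; have := toR _ _ s _ HC => HR; split; apply: cutsR_sub HR => D;
    rewrite inE => /andP[Da /bbP [D1 D2]].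
  - exact: s1.1.
  - exact: s2.1.
have G12toG : forall C, cons_cut G1 C -> cons_cut G2 C -> cons_cut G C.
  move=> C H1 H2.
  have cut0 : forall K : rel E, cons_cut K set0
    by move=> K; apply/cons_cutP => u v _; rewrite inE.
  have cutT : forall K : rel E, cons_cut K setT
    by move=> K; apply/cons_cutP => u v _; rewrite inE.
  case: (lattice r1 (toR _ _ s1 _ H1)) => [->|->|[Ca C1]] //.
  case: (lattice r2 (toR _ _ s2 _ H2)) => [->|->|[_ C2]] //.
  exact: s.1.
apply/setP => C; rewrite !inE; apply/idP/idP => HC.
- apply: G12toG; [exact: (@smin_G1 n E arr proc pos comp G1 G2 hs1 hs2 C HC) | exact: (@smin_G2 n E arr proc pos comp G1 G2 hs1 hs2 C HC)].
- have [H1 H2] := GtoG12 C HC; exact: (@G12_smin n E arr proc pos comp G1 G2 hs1 C H1 H2).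
Qed.
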